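(* Let $(\Omega,\mathcal A)$ be a measurable space, let $K\subset\mathbb C^n$ be compact and let $A$ be a uniform algebra on $K$ whose maximal ideal space is a separable metric space. Let $f:\Omega\times K\to\mathbb C$ satisfy $f(\omega,\cdot)\in A$ for all $\omega$ and $f(\cdot,z)$ measurable for all $z\in K$. Then the map $\omega\mapsto\sigma(f(\omega,\cdot))$ is a random compact set in $\mathbb C$.
   Context: For $h\in A$, $\sigma(h)=\{\lambda\in\mathbb C:\lambda-h \text{ is not invertible in } A\}$. $\mathcal K'(\mathbb C)$ is the space of non-empty compact subsets of $\mathbb C$ with the Hausdorff distance and its Borel $\sigma$-algebra; a random compact set in $\mathbb C$ is a measurable map $\Omega\to\mathcal K'(\mathbb C)$. *)

(* Defs.v *)
From mathcomp Require Import all_boot all_algebra all_classical all_reals all_analysis.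
From mathcomp Require Import complex.
Import numFieldNormedType.Exports.
Import GRing.Theory Num.Theory.
Set Implicit Arguments. Unset Strict Implicit. Unset Printing Implicit Defensive.
Local Open Scope classical_set_scope.
Local Open Scope ring_scope.

(* The complex numbers are R[i] for R : realType,
   viewed as a numClosedFieldType so that MathComp-Analysis equips it with its
   normed (Euclidean) topology. *)
Definition CC (R : realType) : numClosedFieldType := R[i].

Definition cmod (R : realType) (x : CC R) : R :=
  Num.sqrt (complex.Re x ^+ 2 + complex.Im x ^+ 2).

Section UniformAlgebra.
Variables (R : realType) (n : nat).
Local Notation C := (CC R).
Local Notation V := 'rV[C]_n.

Definition eq_on (K : set V) (g h : V -> C) := forall z, K z -> g z = h z.

(* A uniform algebra on the compact set K: a subalgebra of C(K) (represented
   by functions V -> C, only their restrictions to K matter) on a non-empty K, containing the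
   constants, separating the points of K, and closed for the sup-norm on K. *)
Definition uniform_algebra (K : set V) (A : set (V -> C)) : Prop :=
  K !=set0 /\
  (forall g, A g -> {within K, continuous g}) /\
  (forall c : C, A (fun _ => c)) /\
  [/\ forall g h, A g -> A h -> A (fun z => g z + h z),
      forall (c : C) g, A g -> A (fun z => c * g z),
      forall g h, A g -> A h -> A (fun z => g z * h z),
      forall x y, K x -> K y -> x <> y -> exists2 g, A g & g x <> g y
    & forall (u : nat -> V -> C) (g : V -> C), (forall k, A (u k)) ->
        (forall e : R, 0 < e -> exists N, forall k, (N <= k)%N ->
            forall z, K z -> cmod (u k z - g z) < e) ->
        exists2 h, A h & eq_on K h g].

Definition spectrum (K : set V) (A : set (V -> C)) (h : V -> C) : set C :=
  [set l | ~ exists2 g, A g & forall z, K z -> (l - h z) * g z = 1].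

(* Maximal ideal space of A, realized (Gelfand) as the set of characters,
   i.e. nonzero multiplicative linear functionals on A.  Characters are
   represented as maps (V -> C) -> C, only their values on A matter. *)
Definition character (K : set V) (A : set (V -> C)) (phi : (V -> C) -> C) :=
  [/\ forall g h, A g -> A h -> eq_on K g h -> phi g = phi h,
      forall g h, A g -> A h -> phi (fun z => g z + h z) = phi g + phi h,
      forall (c : C) g, A g -> phi (fun z => c * g z) = c * phi g,
      forall g h, A g -> A h -> phi (fun z => g z * h z) = phi g * phi h
    & phi (fun _ => 1) = 1].

Definition char_eq (A : set (V -> C)) (phi psi : (V -> C) -> C) :=
  forall g, A g -> phi g = psi g.

Definition gelfand_open (K : set V) (A : set (V -> C))
    (U : set ((V -> C) -> C)) : Prop :=
  U `<=` character K A /\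
  forall phi, U phi -> exists (k : nat) (hs : 'I_k -> V -> C) (e : R),
    [/\ 0 < e, forall i, A (hs i) &
        forall psi, character K A psi ->
          (forall i, cmod (psi (hs i) - phi (hs i)) < e) -> U psi].

Definition max_ideal_space_separable_metric (K : set V) (A : set (V -> C)) :=
  exists d : ((V -> C) -> C) -> ((V -> C) -> C) -> R,
    [/\ forall phi psi, character K A phi -> character K A psi ->
          0 <= d phi psi /\ (d phi psi = 0 <-> char_eq A phi psi),
        forall phi psi, character K A phi -> character K A psi ->
          d phi psi = d psi phi,
        forall phi psi chi, character K A phi -> character K A psi ->
          character K A chi -> d phi chi <= d phi psi + d psi chi,
        forall U, U `<=` character K A ->
          (gelfand_open K A U <->
           forall phi, U phi -> exists2 e : R, 0 < e &
             forall psi, character K A psi -> d phi psi < e -> U psi)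
      & exists D : set ((V -> C) -> C),
          [/\ countable D, D `<=` character K A &
              forall phi, character K A phi -> forall e : R, 0 < e ->
                exists2 psi, D psi & d phi psi < e]].
End UniformAlgebra.

Section RandomCompact.
Variable R : realType.
Local Notation C := (CC R).

Definition nonempty_compacts : set (set C) := [set X | X !=set0 /\ compact X].

Local Open Scope ereal_scope.
Definition set_dist (a : C) (X : set C) : \bar R :=
  ereal_inf [set (cmod (a - b))%:E | b in X].
Definition hausdorff_dist (X Y : set C) : \bar R :=
  maxe (ereal_sup [set set_dist a Y | a in X])
       (ereal_sup [set set_dist b X | b in Y]).
Local Close Scope ereal_scope.

Definition hausdorff_open (U : set (set C)) : Prop :=
  U `<=` nonempty_compacts /\
  forall X, U X -> exists2 e : R, 0 < e &
    forall Y, nonempty_compacts Y -> (hausdorff_dist X Y < e%:E)%E -> U Y.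

Definition hausdorff_borel : set (set (set C)) :=
  <<s nonempty_compacts, hausdorff_open >>.

Definition random_compact_set (d : measure_display) (Omega : measurableType d)
    (F : Omega -> set C) : Prop :=
  (forall w, nonempty_compacts (F w)) /\
  forall B, hausdorff_borel B -> measurable (F @^-1` B).

Definition borel_measurable_C (d : measure_display) (Omega : measurableType d)
    (g : Omega -> C) : Prop :=
  forall B, <<s (open : set (set C)) >> B -> measurable (g @^-1` B).
End RandomCompact.

(* Main.v *)
Require Import Defs.
From mathcomp Require Import all_boot all_algebra all_classical all_reals all_analysis.
From mathcomp Require Import complex.
From mathcomp Require Import ring lra.
Import ComplexField Num.Theory.
Import numFieldNormedType.Exports.
Import GRing.Theory Num.Theory order.Order.TTheory.
Set Implicit Arguments. Unset Strict Implicit. Unset Printing Implicit Defensive.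
Local Open Scope classical_set_scope.
Local Open Scope ring_scope.
Local Open Scope complex_scope.
Section Basics.
Variable R : realType.
Local Notation C := (CC R).

Lemma normCE (x : C) : `|x| = (cmod x)%:C.
Proof. by rewrite /cmod normc_def. Qed.

Lemma cmod_ge0 (x : C) : 0 <= cmod x.
Proof. exact: sqrtr_ge0. Qed.

Lemma cmodM (x y : C) : cmod (x * y) = cmod x * cmod y.
Proof. by apply: (@complexI R); rewrite -normCE normrM !normCE rmorphM. Qed.

Lemma cmodD (x y : C) : cmod (x + y) <= cmod x + cmod y.
Proof. by rewrite -lecR -normCE rmorphD; apply: le_trans (ler_normD _ _) _; rewrite !normCE. Qed.

Lemma cmodN (x : C) : cmod (- x) = cmod x.
Proof. by apply: (@complexI R); rewrite -normCE normrN normCE. Qed.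

Lemma cmodB (x y : C) : cmod (x - y) = cmod (y - x).
Proof. by rewrite -cmodN opprB. Qed.

Lemma cmod0 : cmod (0 : C) = 0.
Proof. by apply: (@complexI R); rewrite -normCE normr0. Qed.

Lemma cmod1 : cmod (1 : C) = 1.
Proof. by apply: (@complexI R); rewrite -normCE normr1. Qed.

Lemma cmod_eq0 (x : C) : cmod x = 0 -> x = 0.
Proof. by move=> h; apply/eqP; rewrite -normr_eq0 normCE h. Qed.

Lemma cmodV (x : C) : cmod (x^-1) = (cmod x)^-1.
Proof. by apply: (@complexI R); rewrite -normCE normfV normCE fmorphV. Qed.

Lemma cmodX (x : C) k : cmod (x ^+ k) = cmod x ^+ k.
Proof. by apply: (@complexI R); rewrite -normCE normrX normCE rmorphXn. Qed.

Lemma cmodR (r : R) : cmod (r%:C : C) = `|r|.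
Proof. by rewrite /cmod /= expr0n /= addr0 sqrtr_sqr. Qed.

Lemma cmod_i : cmod ('i : C) = 1.
Proof. by rewrite /cmod /= expr0n /= add0r expr1n sqrtr1. Qed.

Lemma cmod_cplx (a b : R) : cmod ((a +i* b)%C : C) <= `|a| + `|b|.
Proof.
have -> : ((a +i* b)%C : C) = a%:C + 'i * b%:C.
  by apply/eqP; rewrite eq_complex /= !mul0r !mul1r !subr0 !add0r !addr0 !eqxx.
by apply: le_trans (cmodD _ _) _; rewrite cmodM cmod_i mul1r !cmodR.
Qed.

Lemma abs_Re_le (x : C) : `|complex.Re x| <= cmod x.
Proof.
case: x => a b; rewrite /cmod /= -sqrtr_sqr ler_sqrt ?lerDl ?sqr_ge0 //.
by rewrite addr_ge0 ?sqr_ge0.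
Qed.

Lemma abs_Im_le (x : C) : `|complex.Im x| <= cmod x.
Proof.
case: x => a b; rewrite /cmod /= -sqrtr_sqr ler_sqrt ?lerDr ?sqr_ge0 //.
by rewrite addr_ge0 ?sqr_ge0.
Qed.

Lemma ltcR' (a b : R) : ((a%:C : C) < b%:C) = (a < b). Proof. exact: ltcR. Qed.
Lemma lecR' (a b : R) : ((a%:C : C) <= b%:C) = (a <= b). Proof. exact: lecR. Qed.

End Basics.

Section Rat.
Variable R : realType.
Local Notation C := (CC R).

Lemma rat_approx (a e : R) : 0 < e -> exists q : rat, `|a - ratr q| < e.
Proof.
move=> e0; have [|q] := @rat_in_itvoo R (a - e) (a + e); first by lra.
rewrite in_itv /= => /andP[h1 h2]; exists q; rewrite ltr_norml; apply/andP.
split; lra.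
Qed.

Definition rq (p : rat * rat) : C := ((ratr p.1 : R) +i* (ratr p.2 : R))%C.

Lemma cplxB (a b c d : R) :
  (((a +i* b)%C : C) - ((c +i* d)%C : C)) = ((a - c) +i* (b - d))%C.
Proof. by apply/eqP; rewrite eq_complex /= !eqxx. Qed.

Lemma rq_dense (x : C) (e : R) : 0 < e -> exists p, cmod (x - rq p) < e.
Proof.
move=> e0; case: x => a b.
have e20 : 0 < e / 2 by lra.
have [q1 h1] := rat_approx a e20; have [q2 h2] := rat_approx b e20.
exists (q1, q2); rewrite /rq /= cplxB.
apply: le_lt_trans (cmod_cplx _ _) _; lra.
Qed.

Lemma nbhsC (x : C) (P : set C) :
  nbhs x P <-> exists2 r : R, 0 < r & forall y, cmod (x - y) < r -> P y.
Proof.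
rewrite nbhs_ballP; split.
- case=> e /= e0 h.
  have ee : e = (cmod e)%:C by rewrite -normCE gtr0_norm.
  have r0 : 0 < cmod e.
    rewrite lt_neqAle cmod_ge0 andbT eq_sym; apply/eqP => /cmod_eq0 h0.
    by move: e0; rewrite h0 ltxx.
  exists (cmod e) => // y hy; apply: h; rewrite -ball_normE /= normCE ee.
  by rewrite ltcR'.
- case=> r r0 h; exists r%:C; first by rewrite /= (_ : 0 = (0:R)%:C) // ltcR'.
  by move=> y; rewrite -ball_normE /= normCE ltcR'; exact: h.
Qed.

Lemma openCP (O : set C) :
  open O <-> forall x, O x -> exists2 r : R, 0 < r & forall y, cmod (x - y) < r -> O y.
Proof.
rewrite openE; split => h x Ox; first exact/nbhsC/h.
exact/nbhsC/h.
Qed.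

Lemma closed_cle (c : C) (r : R) : closed [set y : C | cmod (c - y) <= r].
Proof.
rewrite -openC; apply/openCP => x /= hx.
have hx' : r < cmod (c - x) by rewrite ltNge; apply/negP.
exists (cmod (c - x) - r); first by lra.
move=> y hy hy'; have := cmodD (c - y) (y - x).
rewrite (_ : c - y + (y - x) = c - x); last by ring.
rewrite cmodB in hy; lra.
Qed.

End Rat.

Section CompactC.
Variable R : realType.
Local Notation C := (CC R).

Definition phiC (p : R * R) : C := (p.1 +i* p.2)%C.

Lemma phiC_cont : continuous phiC.
Proof.
move=> p U /= hU; rewrite nbhs_simpl /=.
move/nbhsC: hU => [r r0 hr].
apply/nbhs_ballP; exists (r / 2) => /=; first lra.
case=> a b; case: p hr => p1 p2 hr; rewrite /ball /= => -[h1 h2].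
apply: hr; rewrite /phiC /= cplxB; apply: le_lt_trans (cmod_cplx _ _) _.
move: h1 h2; rewrite /ball /=; lra.
Qed.

Lemma compact_closed_bounded (X : set C) (M : R) :
  closed X -> (forall x, X x -> cmod x <= M) -> compact X.
Proof.
move=> cX bX.
have cB : compact (`[- M, M]%classic `*` `[- M, M]%classic : set (R * R)).
  by apply: compact_setX; apply: segment_compact.
have cY : compact ((`[- M, M]%classic `*` `[- M, M]%classic) `&` phiC @^-1` X).
  apply: compact_closedI => //; apply: preimage_closed => //.
  by move=> x _; apply: phiC_cont.
have -> : X = phiC @` ((`[- M, M]%classic `*` `[- M, M]%classic) `&` phiC @^-1` X).
  apply/seteqP; split; last by move=> _ [p [_ hp] <-].
  move=> x Xx; exists (complex.Re x, complex.Im x); last by case: x Xx.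
  split; last by case: x Xx.
  split; rewrite /= in_itv /= -ler_norml.
  - exact: le_trans (abs_Re_le x) (bX _ Xx).
  - exact: le_trans (abs_Im_le x) (bX _ Xx).
apply: continuous_compact => //; apply: continuous_subspaceT.
exact: phiC_cont.
Qed.

Lemma cmod_cont : continuous (@cmod R : C -> R).
Proof.
move=> x U /= hU; rewrite nbhs_simpl /=.
move/nbhs_ballP: hU => [r /= r0 hr].
apply/nbhsC; exists r => // y hy; apply: hr.
rewrite /ball /=.
have h1 := cmodD (x - y) y; have h2 := cmodD (y - x) x.
rewrite (_ : x - y + y = x) in h1; last by ring.
rewrite (_ : y - x + x = y) in h2; last by ring.
rewrite cmodB in h2; rewrite ltr_norml; apply/andP; split; lra.
Qed.

Lemma compact_boundedC (X : set C) : compact X -> exists M : R, forall x, X x -> cmod x <= M.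
Proof.
move=> cX; have := compact_bounded (continuous_compact (continuous_subspaceT cmod_cont) cX).
case=> M0 [_ hM]; exists (M0 + 1) => x Xx.
have := hM (M0 + 1) ltac:(lra) (cmod x) (ex_intro2 _ _ x Xx erefl).
by rewrite /= ger0_norm ?cmod_ge0.
Qed.

End CompactC.

Section PowSmall.
Variable R : realType.
Lemma pow_small (q e : R) : 0 <= q -> q < 1 -> 0 < e ->
  exists N, forall k, (N <= k)%N -> q ^+ k < e.
Proof.
move=> q0 q1 e0.
have := @cvg_expr R q; rewrite ger0_norm // => /(_ q1).
move/cvgrPdist_lt => /(_ e e0) [N _ hN]; exists N => k /hN /=.
by rewrite sub0r normrN ger0_norm // exprn_ge0.
Qed.
End PowSmall.

Section UA.
Variables (R : realType) (n : nat).
Local Notation C := (CC R).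
Local Notation V := 'rV[C]_n.
Variables (K : set V) (A : set (V -> C)).
Hypothesis cK : compact K.
Hypothesis UA : uniform_algebra K A.

Lemma UA_ne : K !=set0. Proof. by case: UA. Qed.
Lemma UA_cont g : A g -> {within K, continuous g}.
Proof. by case: UA => _ [h _]; exact: h. Qed.
Lemma UA_cst (c : C) : A (fun _ => c). Proof. by case: UA => _ [_ [h _]]. Qed.
Lemma UA_add g h : A g -> A h -> A (fun z => g z + h z).
Proof. by case: UA => _ [_ [_ [hh _ _ _ _]]]; exact: hh. Qed.
Lemma UA_scale (c : C) g : A g -> A (fun z => c * g z).
Proof. by case: UA => _ [_ [_ [_ hh _ _ _]]]; exact: hh. Qed.
Lemma UA_mul g h : A g -> A h -> A (fun z => g z * h z).
Proof. by case: UA => _ [_ [_ [_ _ hh _ _]]]; exact: hh. Qed.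
Lemma UA_lim (u : nat -> V -> C) (g : V -> C) : (forall k, A (u k)) ->
  (forall e : R, 0 < e -> exists N, forall k, (N <= k)%N ->
      forall z, K z -> cmod (u k z - g z) < e) ->
  exists2 h, A h & eq_on K h g.
Proof. by case: UA => _ [_ [_ [_ _ _ _ hh]]]; exact: hh. Qed.

Lemma UA_ext g h : A g -> (forall z, g z = h z) -> A h.
Proof. by move=> Ag e; have -> : h = g by apply: funext => z; rewrite e. Qed.

Lemma UA_opp g : A g -> A (fun z => - g z).
Proof. by move=> Ag; apply: UA_ext (UA_scale (-1) Ag) _ => z; rewrite mulN1r. Qed.

Lemma UA_bounded g : A g -> exists M : R, 0 <= M /\ forall z, K z -> cmod (g z) <= M.
Proof.
move=> Ag; have [M hM] := compact_boundedC (continuous_compact (UA_cont Ag) cK).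
have [z0 Kz0] := UA_ne.
exists M; split; first exact: le_trans (cmod_ge0 _) (hM _ (ex_intro2 _ _ z0 Kz0 erefl)).
by move=> z Kz; apply: hM; exists z.
Qed.

Lemma neumann (u : V -> C) (q : R) : A u -> q < 1 ->
  (forall z, K z -> cmod (u z) <= q) ->
  exists2 v, A v & forall z, K z -> (1 - u z) * v z = 1.
Proof.
move=> Au q1 hu.
have q0 : 0 <= q by have [z0 Kz0] := UA_ne; exact: le_trans (cmod_ge0 _) (hu _ Kz0).
pose s := fix s (k : nat) : V -> C :=
  if k is k'.+1 then fun z => 1 + u z * s k' z else fun _ => 0.
have As : forall k, A (s k).
  elim => [|k IH] /=; first exact: UA_cst.
  exact: (UA_add (UA_cst 1) (UA_mul Au IH)).
have sE : forall k z, (1 - u z) * s k z = 1 - u z ^+ k.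
  elim => [|k IH] z /=; first by rewrite mulr0 expr0 subrr.
  by rewrite mulrDr mulr1 mulrCA IH exprS; ring.
have nz : forall z, K z -> 1 - q <= cmod (1 - u z).
  move=> z Kz; have := cmodD (1 - u z) (u z); rewrite subrK cmod1.
  have := hu _ Kz; lra.
have ne : forall z, K z -> 1 - u z != 0.
  move=> z Kz; apply/eqP => h; have := nz _ Kz; rewrite h cmod0; lra.
have [h Ah hE] : exists2 h, A h & eq_on K h (fun z => (1 - u z)^-1).
  apply: (UA_lim As) => e e0; have [N hN] := @pow_small R q (e * (1 - q)) q0 q1 ltac:(nra).
  exists N => k Nk z Kz.
  have -> : s k z - (1 - u z)^-1 = - (u z ^+ k) / (1 - u z).
    apply: (mulfI (ne _ Kz)); rewrite mulrBr sE mulrCA divff ?ne //.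
    by rewrite mulr1; ring.
  rewrite cmodM cmodN cmodX cmodV.
  have hq : cmod (u z) ^+ k <= q ^+ k by rewrite lerXn2r ?nnegrE ?cmod_ge0 ?hu.
  have := hN _ Nk; have := nz _ Kz.
  have := cmod_ge0 (u z ^+ k); rewrite cmodX => hk0 h1 h2.
  rewrite ltr_pdivrMr; last by lra.
  apply: (le_lt_trans hq); apply: (lt_le_trans h2).
  by rewrite ler_pM2l //; lra.
exists h => // z Kz; rewrite hE // divff //; exact: ne.
Qed.

End UA.

Section Spec.
Variables (R : realType) (n : nat).
Local Notation C := (CC R).
Local Notation V := 'rV[C]_n.
Variables (K : set V) (A : set (V -> C)).
Hypothesis cK : compact K.
Hypothesis UA : uniform_algebra K A.

Lemma spec_point h z : K z -> spectrum K A h (h z).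
Proof.
move=> Kz; rewrite /spectrum /= => -[g _ hg].
by have := hg z Kz; rewrite subrr mul0r => /eqP; rewrite eq_sym oner_eq0.
Qed.

Lemma perturb h g (l l' : C) (M c : R) : A h -> A g ->
  (forall z, K z -> cmod (g z) <= M) ->
  (forall z, K z -> cmod ((l - h z) * g z - 1) <= c) ->
  c + cmod (l' - l) * M < 1 -> ~ spectrum K A h l'.
Proof.
move=> Ah Ag gM hc hlt.
pose u := fun z => 1 - (l' - h z) * g z.
have Au : A u.
  apply: UA_ext (UA_add UA (UA_cst UA 1) (UA_opp UA (UA_mul UA
     (UA_add UA (UA_cst UA l') (UA_opp UA Ah)) Ag))) _ => z /=.
  by [].
have hu : forall z, K z -> cmod (u z) <= c + cmod (l' - l) * M.
  move=> z Kz; rewrite /u (_ : 1 - (l' - h z) * g z =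
     - ((l - h z) * g z - 1) - (l' - l) * g z); last by ring.
  apply: le_trans (cmodD _ _) _; rewrite !cmodN cmodM; apply: lerD; first exact: hc.
  apply: ler_wpM2l; [exact: cmod_ge0 | exact: gM].
have [v Av hv] := neumann UA Au hlt hu.
rewrite /spectrum /= => H; apply: H; exists (fun z => g z * v z); first exact (UA_mul UA Ag Av).
by move=> z Kz; rewrite -[RHS](hv z Kz) /u; ring.
Qed.

Lemma spec_bound h (M : R) (l : C) : A h ->
  (forall z, K z -> cmod (h z) <= M) -> spectrum K A h l -> cmod l <= M.
Proof.
move=> Ah hM; rewrite /spectrum /= => H; rewrite leNgt; apply/negP => lM; apply: H.
have M0 : 0 <= M by have [z0 Kz0] := UA_ne UA; exact: le_trans (cmod_ge0 _) (hM _ Kz0).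
have l0 : l != 0 by apply/eqP => l0; move: lM; rewrite l0 cmod0; lra.
have cl0 : 0 < cmod l by lra.
pose u := fun z => l^-1 * h z.
have hu : forall z, K z -> cmod (u z) <= M / cmod l.
  move=> z Kz; rewrite /u cmodM cmodV mulrC; apply: ler_wpM2r; last exact: hM.
  by rewrite invr_ge0 cmod_ge0.
have q1 : M / cmod l < 1 by rewrite ltr_pdivrMr // mul1r.
have [v Av hv] := neumann UA (UA_scale UA l^-1 Ah) q1 hu.
exists (fun z => l^-1 * v z); first exact (UA_scale UA _ Av).
move=> z Kz; rewrite -[RHS](hv z Kz) /u; field; exact: l0.
Qed.

Lemma spec_closed h : A h -> closed (spectrum K A h).
Proof.
move=> Ah; rewrite -openC; apply/openCP => l /= hl.
case: (pselect (exists2 g, A g & forall z, K z -> (l - h z) * g z = 1)) => [[g Ag hg]|nh];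
  last by exfalso; exact: hl nh.
have [M [M0 gM]] := UA_bounded cK UA Ag.
exists (1 / (2 * (M + 1))); first by rewrite divr_gt0 //; lra.
move=> l' hl'; apply: (@perturb h g l l' M 0) => //.
  by move=> z Kz; rewrite hg // subrr cmod0.
rewrite add0r cmodB.
have h1 : cmod (l - l') * (2 * (M + 1)) < 1 by rewrite -ltr_pdivlMr //; lra.
have := cmod_ge0 (l - l'); nra.
Qed.

Lemma spec_compact h : A h -> compact (spectrum K A h).
Proof.
move=> Ah; have [M [_ hM]] := UA_bounded cK UA Ah.
apply: (@compact_closed_bounded R _ M); first exact: spec_closed.
by move=> l; apply: spec_bound.
Qed.

Lemma spec_ne h : spectrum K A h !=set0.
Proof. by have [z0 Kz0] := UA_ne UA; exists (h z0); exact: spec_point. Qed.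

End Spec.

Section TopV.
Variables (R : realType) (n : nat).
Local Notation C := (CC R).
Local Notation V := 'rV[C]_n.

Lemma cmod_tri (x y z : C) : cmod (x - z) <= cmod (x - y) + cmod (y - z).
Proof.
by have := cmodD (x - y) (y - z); rewrite (_ : x - y + (y - z) = x - z) //; ring.
Qed.

Lemma nbhsV (z : V) (P : set V) :
  nbhs z P <-> exists2 r : R, 0 < r &
    forall z' : V, (forall i, cmod (z 0 i - z' 0 i) < r) -> P z'.
Proof.
rewrite nbhs_ballP; split.
- case=> e /= e0 h.
  have ee : e = (cmod e)%:C by rewrite -normCE gtr0_norm.
  have r0 : 0 < cmod e.
    rewrite lt_neqAle cmod_ge0 andbT eq_sym; apply/eqP => /cmod_eq0 h0.
    by move: e0; rewrite h0 ltxx.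
  exists (cmod e) => // z' hz'; apply: h; split => // i j.
  by rewrite (ord1 i) -ball_normE /= normCE ee ltcR'; exact: hz'.
- case=> r r0 h; exists r%:C; first by rewrite /= (_ : 0 = (0:R)%:C) // ltcR'.
  move=> z' [_ hb]; apply: h => i; have := hb 0 i.
  by rewrite -ball_normE /= normCE ltcR'.
Qed.

Definition BI := ({ffun 'I_n -> rat * rat} * rat)%type.
Definition bset (b : BI) : set V :=
  [set z | forall i, cmod (z 0 i - rq R (b.1 i)) < ratr b.2].

Lemma basis_nbhs (z : V) (P : set V) :
  nbhs z P -> exists b : BI, nbhs z (bset b) /\ bset b `<=` P.
Proof.
move/nbhsV => [r r0 hr].
have [rho] := @rat_in_itvoo R 0 (r / 4) ltac:(lra).
rewrite in_itv /= => /andP[rho0 rho1].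
have /choice [f hf] : forall i : 'I_n, exists p, cmod (z 0 i - rq R p) < ratr rho / 2.
  by move=> i; apply: rq_dense; rewrite divr_gt0.
exists ([ffun i => f i], rho); split.
- apply/nbhsV; exists (ratr rho / 2); first lra.
  move=> z' hz' i; rewrite /= ffunE.
  have := cmod_tri (z' 0 i) (z 0 i) (rq R (f i)); rewrite (cmodB (z' 0 i) (z 0 i)).
  have := hz' i; have := hf i; lra.
- move=> z' hz'; apply: hr => i; have := hz' i; rewrite /= ffunE => h1.
  have := cmod_tri (z 0 i) (rq R (f i)) (z' 0 i); rewrite (cmodB (rq R (f i))).
  have := hf i; lra.
Qed.

Definition KdOK (K : set V) (b : BI) := exists z, K z /\ bset b z.
Definition kd (K : set V) (b : BI) : V :=
  if pselect (KdOK K b) is left H then projT1 (cid H) else 0.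

Lemma kd_in K b : KdOK K b -> K (kd K b) /\ bset b (kd K b).
Proof. by rewrite /kd; case: pselect => // H _; case: (cid H). Qed.

Lemma kd_dense K z (P : set V) : K z -> nbhs z P -> exists2 b, KdOK K b & P (kd K b).
Proof.
move=> Kz /basis_nbhs [b [nb sb]].
have ob : KdOK K b by exists z; split => //; exact: nbhs_singleton nb.
by exists b => //; apply: sb; case: (kd_in ob).
Qed.

Lemma within_cont_nbhs (K : set V) (g : V -> C) z (e : R) :
  {within K, continuous g} -> K z -> 0 < e ->
  nbhs z (fun z' => K z' -> cmod (g z - g z') < e).
Proof.
move=> /subspace_continuousP gc Kz e0.
have hN : nbhs (g z) [set y | cmod (g z - y) < e] by apply/nbhsC; exists e.
have := gc z Kz; move/(_ _ hN).
by rewrite /= nbhs_simpl /within /=; exact: id.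
Qed.

Lemma Kd_extend K (g : V -> C) (c : R) : {within K, continuous g} ->
  (forall b, KdOK K b -> cmod (g (kd K b)) <= c) -> forall z, K z -> cmod (g z) <= c.
Proof.
move=> gc hb z Kz; rewrite leNgt; apply/negP => hz.
have e0 : 0 < cmod (g z) - c by lra.
have [b ob hb'] := kd_dense Kz (within_cont_nbhs gc Kz e0).
have := hb b ob; have := hb' (kd_in ob).1.
have := cmod_tri (g z) (g (kd K b)) 0; rewrite !subr0; lra.
Qed.

End TopV.

Lemma compact_fin_nbhs (T : ptopologicalType) (I : choiceType) (X : set T)
  (D : set I) (U : I -> set T) :
  compact X -> (forall x, X x -> exists2 i, D i & nbhs x (U i)) ->
  exists s : seq I, (forall i, i \in s -> D i) /\
     (forall x, X x -> exists2 i, i \in s & U i x).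
Proof.
rewrite compact_cover => cX hX.
have [D' sD hD'] := cX I D (fun i => (U i)°) (fun i _ => @open_interior _ _)
  (fun x Xx => let: ex_intro2 i Di hi := hX x Xx in ex_intro2 _ _ i Di hi).
exists (finmap.enum_fset D'); split.
  by move=> i /sD; rewrite inE.
move=> x /hD' [i Di hi]; exists i => //.
exact: nbhs_singleton hi.
Qed.

Section DA.
Variables (R : realType) (n : nat).
Local Notation C := (CC R).
Local Notation V := 'rV[C]_n.
Variables (K : set V) (A : set (V -> C)).
Hypothesis cK : compact K.
Hypothesis UA : uniform_algebra K A.

Definition JI := (seq (BI n * (rat * rat)) * rat)%type.
Definition Cell (j : JI) (g : V -> C) :=
  forall p, p \in j.1 -> forall z, K z -> bset p.1 z ->
    cmod (g z - rq R p.2) <= ratr j.2.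
Definition DAok j := exists g, A g /\ Cell j g.
Definition da (j : JI) : V -> C :=
  if pselect (DAok j) is left H then projT1 (cid H) else (fun _ => 0).

Lemma da_A j : A (da j).
Proof.
rewrite /da; case: pselect => [H|_]; last exact (UA_cst UA 0).
by case: (cid H) => g [].
Qed.

Lemma da_cell j : DAok j -> Cell j (da j).
Proof. by rewrite /da; case: pselect => // H _; case: (cid H) => g []. Qed.

Lemma DA_dense g0 (e : R) : A g0 -> 0 < e ->
  exists j, forall z, K z -> cmod (da j z - g0 z) <= e.
Proof.
move=> Ag e0.
have [dl] := @rat_in_itvoo R 0 (e / 2) ltac:(lra).
rewrite in_itv /= => /andP[dl0 dl1].
pose D := [set p : BI n * (rat * rat) | forall z, K z -> bset p.1 z ->
   cmod (g0 z - rq R p.2) <= ratr dl].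
have hX : forall z, K z -> exists2 p, D p & nbhs z (bset p.1).
  move=> z Kz.
  have hn := within_cont_nbhs (UA_cont UA Ag) Kz (ltac:(lra) : 0 < ratr dl / 2).
  have [b [nb sb]] := basis_nbhs hn.
  have [c hc] := rq_dense (g0 z) (ltac:(lra) : 0 < ratr dl / 2).
  exists (b, c) => //= z' Kz' bz'; have := sb z' bz' Kz'.
  have := cmod_tri (g0 z') (g0 z) (rq R c); rewrite (cmodB (g0 z') (g0 z)); lra.
have [s [sD scov]] := compact_fin_nbhs cK hX.
pose j : JI := (s, dl).
have ok : DAok j by exists g0; split => // p /sD.
exists j => z Kz; have [p ps pz] := scov z Kz.
have := da_cell ok ps Kz pz; have := sD p ps z Kz pz.
have := cmod_tri (da j z) (rq R p.2) (g0 z); rewrite (cmodB (rq R p.2)) /=; lra.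
Qed.

End DA.

Section MeasGen.
Variables (d : measure_display) (Omega : measurableType d).

Lemma meas_cond (P : Prop) (S : set Omega) : (P -> measurable S) ->
  measurable [set w | P /\ S w].
Proof.
move=> mS; case: (pselect P) => hP; first have {}mS := mS hP.
  rewrite (_ : [set w | P /\ S w] = S) //; apply/seteqP; split => w /=.
    by case.
  by move=> Sw; split.
rewrite (_ : [set w | P /\ S w] = set0) //; apply/seteqP; split => w //=.
by case.
Qed.

Lemma meas_exists (T : countType) (P : T -> Prop) (S : T -> set Omega) :
  (forall t, P t -> measurable (S t)) -> measurable [set w | exists t, P t /\ S t w].
Proof.
move=> mS.
rewrite (_ : [set w | exists t, P t /\ S t w] = \bigcup_t [set w | P t /\ S t w]).
  by apply: countable_bigcupT_measurable; [exact: countableP | move=> t; apply: meas_cond; exact: mS].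
by apply/seteqP; split => w /= [t h]; exists t.
Qed.

Lemma meas_forall (T : countType) (P : T -> Prop) (S : T -> set Omega) :
  (forall t, P t -> measurable (S t)) -> measurable [set w | forall t, P t -> S t w].
Proof.
move=> mS.
rewrite (_ : [set w | forall t, P t -> S t w] = ~` [set w | exists t, P t /\ (~` S t) w]).
  by apply: measurableC; apply: meas_exists => t Pt; apply: measurableC; exact: mS.
apply/seteqP; split => w /=.
  by move=> h [t [Pt nS]]; apply: nS; exact: h.
move=> h t Pt; case: (pselect (S t w)) => // nS; exfalso; apply: h; exists t; split => //.
Qed.

Lemma meas_list (T : eqType) (s : seq T) (S : T -> set Omega) :
  (forall t, t \in s -> measurable (S t)) -> measurable [set w | forall t, t \in s -> S t w].
Proof.
elim: s => [|a s IH] mS.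
  by rewrite (_ : [set w | _] = setT) //; apply/seteqP; split => w //= _ t.
rewrite (_ : [set w | _] = S a `&` [set w | forall t, t \in s -> S t w]).
  apply: measurableI; first by apply: mS; rewrite mem_head.
  by apply: IH => t ts; apply: mS; rewrite in_cons ts orbT.
apply/seteqP; split => w /=.
  by move=> h; split; [apply: h; rewrite mem_head | move=> t ts; apply: h; rewrite in_cons ts orbT].
by move=> [h1 h2] t; rewrite in_cons => /orP[/eqP->|]; [|exact: h2].
Qed.

End MeasGen.

Section Borel.
Variables (R : realType) (d : measure_display) (Omega : measurableType d).
Local Notation C := (CC R).

Lemma borel_closed (S : set C) : closed S -> <<s (open : set (set C)) >> S.
Proof.
move=> cS; rewrite -[S]setCK -setTD; apply: sigma_algebraCD.
by apply: sub_sigma_algebra; rewrite /= openC.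
Qed.

Lemma mclosed (g : Omega -> C) (S : set C) : borel_measurable_C g -> closed S ->
  measurable (g @^-1` S).
Proof. by move=> hg cS; apply: hg; apply: borel_closed. Qed.

Lemma closed_aff (al be : C) (c : R) : closed [set x : C | cmod (al * x + be) <= c].
Proof.
rewrite -openC; apply/openCP => x /= hx.
have hx' : c < cmod (al * x + be) by rewrite ltNge; apply/negP.
have a0 : 0 < cmod al + 1 by have := cmod_ge0 al; lra.
exists ((cmod (al * x + be) - c) / (cmod al + 1)).
  by apply: divr_gt0 => //; lra.
move=> y hy hy'; have := cmod_tri (al * x + be) (al * y + be) 0.
rewrite !subr0 (_ : al * x + be - (al * y + be) = al * (x - y)); last by ring.
rewrite cmodM; move: hy; rewrite ltr_pdivlMr // => hy.
have := cmod_ge0 al; have := cmod_ge0 (x - y); nra.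
Qed.

End Borel.

Section Emeas.
Variables (R : realType) (d : measure_display) (Omega : measurableType d) (n : nat).
Local Notation C := (CC R).
Local Notation V := 'rV[C]_n.
Variables (K : set V) (A : set (V -> C)) (f : Omega -> V -> C).
Hypothesis cK : compact K.
Hypothesis UA : uniform_algebra K A.
Hypothesis fA : forall w, A (f w).
Hypothesis fm : forall z, K z -> borel_measurable_C (fun w => f w z).

Lemma UA_resid (h g : V -> C) (a : C) : A h -> A g -> A (fun z => (a - h z) * g z - 1).
Proof.
move=> Ah Ag.
exact (UA_add UA (UA_mul UA (UA_add UA (UA_cst UA a) (UA_opp UA Ah)) Ag) (UA_cst UA (-1))).
Qed.

Lemma meas_Kd (al be : BI n -> C) (c : R) :
  measurable [set w | forall b, KdOK K b -> cmod (al b * f w (kd K b) + be b) <= c].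
Proof.
apply: meas_forall => b ob.
exact (mclosed (fm (kd_in ob).1) (@closed_aff R (al b) (be b) c)).
Qed.

Definition Tset (p : rat * rat) (j : JI n) : set Omega :=
  [set w | forall b, KdOK K b ->
     cmod ((rq R p - f w (kd K b)) * da K A j (kd K b) - 1) <= 1 / 2].

Lemma Tset_meas p j : measurable (Tset p j).
Proof.
have e : forall x y : C, (rq R p - x) * y - 1 = (- y) * x + (rq R p * y - 1).
  by move=> x y; ring.
rewrite (_ : Tset p j = [set w | forall b, KdOK K b ->
   cmod ((- da K A j (kd K b)) * f w (kd K b) + (rq R p * da K A j (kd K b) - 1)) <= 1 / 2]).
  exact: meas_Kd.
by apply/seteqP; split => w h b ob; have := h b ob; rewrite e.
Qed.

Definition TT := ((rat * rat) * JI n * rat)%type.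
Definition Ublk (t : TT) : set C := [set l | cmod (l - rq R t.1.1) * ratr t.2 < 1 / 2].
Definition Good (Fc : set C) (L : seq TT) :=
  (forall t, t \in L -> 0 < (ratr t.2 : R) /\ forall z, K z -> cmod (da K A t.1.2 z) <= ratr t.2)
  /\ (forall l, Fc l -> exists2 t, t \in L & Ublk t l).

Lemma key_nbhs w (l : C) : ~ spectrum K A (f w) l ->
  exists2 t : TT, (0 < (ratr t.2 : R) /\ (forall z, K z -> cmod (da K A t.1.2 z) <= ratr t.2)
                   /\ Tset t.1.1 t.1.2 w) & nbhs l (Ublk t).
Proof.
move=> nl.
have [g0 Ag0 hg0] : exists2 g0, A g0 & forall z, K z -> (l - f w z) * g0 z = 1.
  case: (pselect (exists2 g0, A g0 & forall z, K z -> (l - f w z) * g0 z = 1)) => [//|nh].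
  by exfalso; apply: nl; exact: nh.
have [Hf [Hf0 hHf]] := UA_bounded cK UA (fA w).
pose Hl := cmod l + Hf.
have Hl0 : 0 <= Hl by have := cmod_ge0 l; rewrite /Hl; lra.
pose ep := 1 / (4 * (Hl + 1)).
have ep0 : 0 < ep by rewrite /ep divr_gt0 //; lra.
have Hlep : Hl * ep <= 1 / 4.
  rewrite /ep mulrA mulr1 ler_pdivrMr; last by lra.
  lra.
have [j hj] := DA_dense cK UA Ag0 ep0.
pose g := da K A j.
have [M0 [M00 hM0]] := UA_bounded cK UA (da_A UA j).
have [M] := @rat_in_itvoo R (M0 + 1) (M0 + 2) ltac:(lra).
rewrite in_itv /= => /andP[hM1 hM2].
have M0' : 0 < ratr M :> R by lra.
pose r : R := 1 / (8 * ratr M).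
have r0 : 0 < r by rewrite /r divr_gt0 //; lra.
have rM : r * ratr M = 1 / 8.
  rewrite /r; field; apply/eqP; lra.
have [p hp] := rq_dense l r0.
exists ((p, j), M); first split => //=.
  split; first by move=> z Kz; apply: le_trans (hM0 z Kz) _; lra.
  move=> b ob; have [Kz _] := kd_in ob; move: (kd K b) Kz => z Kz.
  rewrite (_ : (rq R p - f w z) * da K A j z - 1 =
     (l - f w z) * (da K A j z - g0 z) + (rq R p - l) * da K A j z +
     ((l - f w z) * g0 z - 1)); last by ring.
  rewrite hg0 // subrr addr0.
  have h1 : cmod (l - f w z) <= Hl.
    by have := cmodD l (- f w z); rewrite cmodN; have := hHf z Kz; rewrite /Hl; lra.
  have h2 : cmod ((l - f w z) * (da K A j z - g0 z)) <= 1 / 4.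
    rewrite cmodM; apply: le_trans Hlep.
    by apply: ler_pM; rewrite ?cmod_ge0 //; exact: hj.
  have h3 : cmod ((rq R p - l) * da K A j z) <= 1 / 8.
    rewrite cmodM -rM; apply: ler_pM; rewrite ?cmod_ge0 //.
      by rewrite cmodB; exact: ltW.
    by apply: le_trans (hM0 z Kz) _; lra.
  by have := cmodD ((l - f w z) * (da K A j z - g0 z)) ((rq R p - l) * da K A j z); lra.
apply/nbhsC; exists r => // l' hl'; rewrite /Ublk /=.
have h := cmod_tri l' l (rq R p); rewrite (cmodB l' l) in h.
have h4 : cmod (l' - rq R p) < 2 * r by lra.
have : cmod (l' - rq R p) * ratr M < 2 * r * ratr M by rewrite ltr_pM2r.
rewrite -mulrA rM; lra.
Qed.

Lemma E_meas (Fc : set C) : compact Fc ->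
  measurable [set w | forall l, Fc l -> ~ spectrum K A (f w) l].
Proof.
move=> cF.
rewrite (_ : [set w | forall l, Fc l -> ~ spectrum K A (f w) l] =
   [set w | exists L : seq TT, Good Fc L /\
      [set w | forall t, t \in L -> Tset t.1.1 t.1.2 w] w]).
  by apply: meas_exists => L _; apply: meas_list => t _; exact: Tset_meas.
apply/seteqP; split => w /=.
- move=> h.
  have [s [sD scov]] := compact_fin_nbhs cF (fun l Fl => key_nbhs (h l Fl)).
  exists s; split; last by move=> t /sD [_ []].
  split; last exact: scov.
  by move=> t /sD [t0 [tb _]].
- case=> L [[hL hcov] hT] l Fl.
  have [t tL Ut] := hcov l Fl; have [M0 gM] := hL t tL.
  have hz := Kd_extend (UA_cont UA (UA_resid (rq R t.1.1) (fA w) (da_A UA t.1.2))) (hT t tL).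
  apply: (perturb UA (fA w) (da_A UA t.1.2) gM hz).
  by move: Ut; rewrite /Ublk /=; lra.
Qed.

End Emeas.

Section Final.
Variables (R : realType) (d : measure_display) (Omega : measurableType d) (n : nat).
Local Notation C := (CC R).
Local Notation V := 'rV[C]_n.
Variables (K : set V) (A : set (V -> C)) (f : Omega -> V -> C).
Hypothesis cK : compact K.
Hypothesis UA : uniform_algebra K A.
Hypothesis fA : forall w, A (f w).
Hypothesis fm : forall z, K z -> borel_measurable_C (fun w => f w z).

Local Notation F w := (spectrum K A (f w)).

Lemma cball_compact (a : C) (r : R) : compact [set y : C | cmod (a - y) <= r].
Proof.
apply: (@compact_closed_bounded R _ (cmod a + r)); first exact: closed_cle.
move=> y /= hy; have := cmod_tri y a 0; rewrite !subr0 (cmodB y a); lra.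
Qed.

Lemma hit_ball (a : C) (r : R) :
  measurable [set w | exists l, F w l /\ cmod (a - l) < r].
Proof.
rewrite (_ : [set w | exists l, F w l /\ cmod (a - l) < r] =
  [set w | exists rho : rat, ratr rho < r /\
     (~` [set w | forall l, [set y : C | cmod (a - y) <= ratr rho] l -> ~ F w l]) w]).
  apply: meas_exists => rho _; apply: measurableC.
  exact (E_meas cK UA fA fm (@cball_compact a (ratr rho))).
apply/seteqP; split => w /=.
- case=> l [Fl hl].
  have [rho] := @rat_in_itvoo R (cmod (a - l)) r hl.
  rewrite in_itv /= => /andP[h1 h2]; exists rho; split => //.
  by move=> h; apply: (h l) => //; exact: ltW.
- case=> rho [hr hE].
  case: (pselect (exists l, F w l /\ cmod (a - l) <= ratr rho)) => [[l [Fl hl]]|nh].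
    by exists l; split => //; lra.
  by exfalso; apply: hE => l hl Fl; apply: nh; exists l.
Qed.

Lemma bounded_set_eq (m : R) :
  [set w | forall b, KdOK K b -> cmod (1 * f w (kd K b) + 0) <= m] =
  [set w | forall z, K z -> cmod (f w z) <= m].
Proof.
apply/seteqP; split => w /= h.
  apply: Kd_extend; first exact (UA_cont UA (fA w)).
  by move=> b ob; have := h b ob; rewrite mul1r addr0.
by move=> b ob; rewrite mul1r addr0; apply: h; exact: (kd_in ob).1.
Qed.

Lemma incl_open (O : set C) : open O -> measurable [set w | forall l, F w l -> O l].
Proof.
move=> oO.
have cFc : forall m : nat, compact ([set y : C | cmod (0 - y) <= m%:R] `&` ~` O).
  move=> m; apply: (@compact_closed_bounded R _ m%:R).
    by apply: closedI; [exact: closed_cle | rewrite closedC].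
  by move=> y [/= hy _]; move: hy; rewrite sub0r cmodN.
rewrite (_ : [set w | forall l, F w l -> O l] =
  [set w | exists m : nat, True /\
    ([set w | forall b, KdOK K b -> cmod (1 * f w (kd K b) + 0) <= m%:R] `&`
     [set w | forall l, ([set y : C | cmod (0 - y) <= m%:R] `&` ~` O) l -> ~ F w l]) w]).
  apply: meas_exists => m _; apply: measurableI.
    exact: (meas_Kd fm).
  exact (E_meas cK UA fA fm (cFc m)).
apply/seteqP; split => w /=.
- move=> h; have [Hf [Hf0 hHf]] := UA_bounded cK UA (fA w).
  have [m hm] : exists m : nat, Hf <= m%:R.
    by exists (Num.Def.trunc Hf).+1; apply: ltW; exact: truncnS_gt.
  exists m; split => //; split.
    by move=> b ob; rewrite mul1r addr0; exact: le_trans (hHf _ (kd_in ob).1) hm.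
  by move=> l [_ nO] Fl; apply: nO; exact: h.
- case=> m [_ [hb hE]] l Fl.
  have {}hb : [set w | forall z, K z -> cmod (f w z) <= m%:R] w by rewrite -bounded_set_eq.
  have hl := spec_bound UA (fA w) hb Fl.
  case: (pselect (O l)) => // nO; exfalso; apply: (hE l) => //; split => //.
  by rewrite /= sub0r cmodN.
Qed.

Definition ballQ (q : (rat * rat) * rat) : set C :=
  [set l | cmod (rq R q.1 - l) < ratr q.2].
Definition OQ (Q : seq ((rat * rat) * rat)) : set C :=
  [set l | exists2 q, q \in Q & ballQ q l].
Definition NQ (Q : seq ((rat * rat) * rat)) : set (set C) :=
  [set Y | nonempty_compacts Y /\ (forall l, Y l -> OQ Q l) /\
     (forall q, q \in Q -> exists l, Y l /\ ballQ q l)].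

Lemma ballQ_nbhs q l : ballQ q l -> nbhs l (ballQ q).
Proof.
rewrite /ballQ /= => hl; apply/nbhsC.
exists (ratr q.2 - cmod (rq R q.1 - l)); first lra.
move=> y hy /=; have := cmod_tri (rq R q.1) l y; lra.
Qed.

Lemma OQ_open Q : open (OQ Q).
Proof.
rewrite openE => l [q qQ hq]; apply: filterS (ballQ_nbhs hq) => y hy.
by exists q.
Qed.

Lemma NQ_meas Q : measurable [set w | NQ Q (F w)].
Proof.
rewrite (_ : [set w | NQ Q (F w)] = [set w | forall l, F w l -> OQ Q l] `&`
   [set w | forall q, q \in Q -> [set w | exists l, F w l /\ cmod (rq R q.1 - l) < ratr q.2] w]).
  apply: measurableI; first exact (incl_open (@OQ_open Q)).
  by apply: meas_list => q _; exact: hit_ball.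
apply/seteqP; split => w /=.
  by case=> _ [h1 h2]; split.
case=> h1 h2; split; last by split.
by split; [exact: spec_ne | exact: spec_compact].
Qed.

Lemma hd_le (X Y : set C) (r : R) :
  (forall a, X a -> exists b, Y b /\ cmod (a - b) <= r) ->
  (forall b, Y b -> exists a, X a /\ cmod (b - a) <= r) ->
  (hausdorff_dist X Y <= r%:E)%E.
Proof.
move=> h1 h2; rewrite /hausdorff_dist ge_max; apply/andP; split.
  apply: ge_ereal_sup => _ [a Xa <-]; have [b [Yb hb]] := h1 a Xa.
  by apply: ereal_inf_le; exists (cmod (a - b))%:E; [exists b | rewrite lee_fin].
apply: ge_ereal_sup => _ [b Yb <-]; have [a [Xa ha]] := h2 b Yb.
by apply: ereal_inf_le; exists (cmod (b - a))%:E; [exists a | rewrite lee_fin].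
Qed.

Lemma hopen_meas (U : set (set C)) : hausdorff_open U -> measurable [set w | U (F w)].
Proof.
move=> [UD hU].
rewrite (_ : [set w | U (F w)] = [set w | exists Q, NQ Q `<=` U /\ NQ Q (F w)]).
  by apply: meas_exists => Q _; exact: NQ_meas.
apply/seteqP; split => w /=; last by case=> Q [sQ hQ]; exact: sQ.
move=> UF; have [e e0 he] := hU _ UF.
have [rho] := @rat_in_itvoo R 0 (e / 3) ltac:(lra).
rewrite in_itv /= => /andP[rho0 rho1].
pose D := [set c : rat * rat | exists x, F w x /\ cmod (rq R c - x) < ratr rho].
have cX := spec_compact cK UA (fA w).
have hX : forall x, F w x -> exists2 c, D c & nbhs x (ballQ (c, rho)).
  move=> x Fx; have [c hc] := rq_dense x rho0.
  exists c; first by exists x; split => //; rewrite cmodB.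
  by apply: ballQ_nbhs; rewrite /ballQ /= cmodB.
have [s [sD scov]] := compact_fin_nbhs cX hX.
exists [seq (c, rho) | c <- s]; split.
  move=> Y [[Yne Ycp] [YO Ymeet]]; apply: (he Y (conj Yne Ycp)).
  apply: (@le_lt_trans _ _ (2 * ratr rho)%:E); last by rewrite lte_fin; lra.
  apply: hd_le.
  - move=> a Fa; have [c cs hc] := scov a Fa.
    have [b [Yb hb]] := Ymeet (c, rho) (map_f _ cs).
    exists b; split => //; move: hc hb; rewrite /ballQ /= => hc hb.
    have := cmod_tri a (rq R c) b; rewrite (cmodB a (rq R c)); lra.
  - move=> b Yb; have [q /mapP [c cs ->] hq] := YO b Yb.
    have [x [Fx hx]] := sD c cs.
    exists x; split => //; move: hq; rewrite /ballQ /= => hq.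
    have := cmod_tri b (rq R c) x; rewrite (cmodB b (rq R c)); lra.
split; first by split; [exact: spec_ne | exact: cX].
split.
  by move=> l Fl; have [c cs hc] := scov l Fl; exists (c, rho) => //; exact: map_f.
move=> q /mapP [c cs ->]; have [x [Fx hx]] := sD c cs.
by exists x; split.
Qed.

Lemma borel_meas (B : set (set C)) : hausdorff_borel B -> measurable [set w | B (F w)].
Proof.
move=> hB.
suff : @hausdorff_borel R `<=` [set B | measurable [set w | B (F w)]] by apply.
apply: smallest_sub; last by move=> U hU; exact: hopen_meas.
split.
- by rewrite /= (_ : [set w | set0 (F w)] = set0) //; apply/seteqP; split.
- move=> B' /= mB'.
  rewrite (_ : [set w | (@nonempty_compacts R `\` B') (F w)] = ~` [set w | B' (F w)]).
    exact: measurableC.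
  apply/seteqP; split => w /=; first by case.
  by move=> nB; split => //; split; [exact: spec_ne | exact: spec_compact].
- move=> Bs mBs /=.
  rewrite (_ : [set w | (\bigcup_k Bs k) (F w)] = \bigcup_k [set w | Bs k (F w)]).
    exact: bigcupT_measurable.
  by apply/seteqP; split => w /=.
Qed.

End Final.

Local Close Scope complex_scope.

Theorem proposition6p7 (R : realType) (d : measure_display)
  (Omega : measurableType d) (n : nat) (K : set 'rV[CC R]_n)
  (A : set ('rV[CC R]_n -> CC R))
  (f : Omega -> 'rV[CC R]_n -> CC R) :
  compact K ->
  uniform_algebra K A ->
  max_ideal_space_separable_metric K A ->
  (forall w, A (f w)) ->
  (forall z, K z -> borel_measurable_C (fun w => f w z)) ->
  random_compact_set (fun w => spectrum K A (f w)).
Proof.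
move=> cK UA _ fA fm; split.
  by move=> w; split; [exact: spec_ne | exact: spec_compact].
by move=> B hB; exact: (borel_meas cK UA fA fm hB).
Qed.
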